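(* Let $h$ be an admissible perturbation and $\alpha\in(0,1)$. There exists $l>0$ (depending only on $h$ and the network) such that for every $\eta>0$ there is $t_0\ge0$ with the following property: for every admissible initial condition, the solution of the dynamics with rate $\eta$ satisfies $$\tilde\nabla_\pi W(\rho(t),\pi(t))'\big(F^h(f(t))-\pi(t)\big)\le\frac{2l}{1-\alpha}\qquad\forall t\ge t_0.$$
   Context: Network: $\mathcal G=(\mathcal V,\mathcal E)$ is a finite directed graph with $\mathcal V=\{0,1,\dots,n\}$, containing no directed cycle, in which node $0$ is the unique node with no incoming link, node $n$ is the unique node with no outgoing link, there is a directed path from every node to $n$, and every link $(u,v)\in\mathcal E$ satisfies $u<v$. For $v\in\mathcal V$, $\mathcal E_v^-$ and $\mathcal E_v^+$ are the sets of links entering and leaving $v$. Each link $e$ has a flow-density function $\mu_e:[0,\infty)\to[0,\infty)$ that is continuously differentiable, strictly increasing, strictly concave, with $\mu_e(0)=0$ and $\mu_e'(0)<\infty$; its capacity is $C_e:=\lim_{\rho\to\infty}\mu_e(\rho)\in(0,+\infty]$. Put $\mathcal F_v:=\prod_{e\in\mathcal E_v^+}[0,C_e)$, $\mathcal F:=\prod_{e\in\mathcal E}[0,C_e)$, and $\mu(\rho):=(\mu_e(\rho_e))_{e\in\mathcal E}$. The delay is $T_e(f_e)=\mu_e^{-1}(f_e)/f_e$ for $0<f_e<C_e$, $T_e(0)=1/\mu_e'(0)$, $T_e(f_e)=+\infty$ for $f_e\ge C_e$; $T(f):=(T_e(f_e))_e$. $\mathcal P$ is the set of directed paths from $0$ to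 $n$, $A\in\{0,1\}^{\mathcal E\times\mathcal P}$ the link-path incidence matrix ($A_{ep}=1$ iff $e\in p$), $\mathcal S(\mathcal P)=\{\pi\in\mathbb R_+^{\mathcal P}:\sum_p\pi_p=1\}$, $\Pi:=\{\pi\in\mathcal S(\mathcal P):(A\pi)_e<C_e\ \forall e\}$, and $f^\pi:=A\pi$. The min-cut capacity $C^*:=\min\{\sum_{(u,v)\in\mathcal E:u\in\mathcal U,v\notin\mathcal U}C_{(u,v)}:\mathcal U\subseteq\mathcal V,0\in\mathcal U,n\notin\mathcal U\}$ is assumed to satisfy $C^*>1$. Perturbation: $\Phi:=I-|\mathcal P|^{-1}\mathbf 1\mathbf 1'$; interiors $\mathrm{int}$ and boundaries $\partial$ of subsets of $\mathcal S(\mathcal P)$ are relative to the hyperplane $\{x:\mathbf 1'x=1\}$. An admissible perturbation is a function $h:\Pi_h\to\mathbb R$, where $\Pi_h\subseteq\Pi$ is closed in $\mathbb R^{\mathcal P}$, convex, with nonempty interior, $h$ is strictly convex, twice differentiable on $\mathrm{int}(\Pi_h)$, and $\|\tilde\nabla h(\pi)\|\to+\infty$ as $\pi\to\partial\Pi_h$, where $\tilde\nabla h:=\Phi\nabla h$. Its perturbed best response is $F^h(f):=\arg\min_{\omega\in\Pi_h}\{\omega'A'T(f)+h(\omega)\}$ for $f\in\mathcal F$. Local decisions: for each $v\in\{0,\dots,n-1\}$ a continuously differentiable $G^v:\mathcal F_v\times\Pi\to\mathcal S(\mathcal E_v^+)$ is given such that (consistency) $(\sum_{j\in\mathcal E_v^+}f^\pi_j)\,G^v_e(f^\pi_{\mathcal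 E_v^+},\pi)=f^\pi_e$ for all $\pi\in\Pi$, $e\in\mathcal E_v^+$; and (cooperativity) $\partial G^v_j(f_{\mathcal E_v^+},\pi)/\partial f_e\ge0$ for all $\pi\in\Pi$, $f_{\mathcal E_v^+}\in\mathcal F_v$, $j\neq e\in\mathcal E_v^+$. For $f\in\mathcal F$, $\pi\in\Pi$, $e\in\mathcal E_v^+$: $H_e(f,\pi):=G^v_e(f_{\mathcal E_v^+},\pi)-f_e$ if $v=0$, and $H_e(f,\pi):=(\sum_{j\in\mathcal E_v^-}f_j)G^v_e(f_{\mathcal E_v^+},\pi)-f_e$ if $1\le v<n$. Dynamics: for $\eta>0$, $\dot\pi=\eta(F^h(f)-\pi)$, $\dot\rho=H(f,\pi)$, $f=\mu(\rho)$. An admissible initial condition is $\pi(0)\in\Pi$ with all entries positive and $\rho(0)\in(0,\infty)^{\mathcal E}$; $(\pi(t),\rho(t))_{t\ge0}$ denotes the (unique, global) solution, $f(t):=\mu(\rho(t))$, $f^\pi(t):=A\pi(t)$. Lyapunov notation: for $\pi\in\Pi$, $\rho^\pi_e:=\mu_e^{-1}(f^\pi_e)$; $\sigma_e:=\mathrm{sgn}(\rho_e-\rho^\pi_e)$ with $\mathrm{sgn}(0)=0$; $W(\rho,\pi):=\sum_{v=0}^{n-1}\alpha^v\sum_{e\in\mathcal E_v^+}|\rho_e-\rho^\pi_e|$. Its gradient in $\pi$ is taken with the convention $\frac{d}{dx}|x|=\mathrm{sgn}(x)$ for all $x$, i.e. $\partial W(\rho,\pi)/\partial\pi_p:=-\sum_{v=0}^{n-1}\alpha^v\sum_{e\in\mathcal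 E_v^+}\sigma_e A_{ep}/\mu_e'(\rho^\pi_e)$, and $\tilde\nabla_\pi W:=\Phi\nabla_\pi W$. *)

(* Defs.v *)
From Stdlib Require Import Reals Lra List Arith Bool ClassicalEpsilon.
Import ListNotations.
Open Scope R_scope.

(* Vectors indexed by a finite index set {0,..,m-1} are encoded as nat -> R. *)
Definition sumR (l : list nat) (f : nat -> R) : R :=
  fold_right (fun k acc => f k + acc) 0 l.
Definition rng (m : nat) : list nat := List.seq 0 m.
Definition nrmL (l : list nat) (x : nat -> R) : R := sqrt (sumR l (fun k => x k ^ 2)).
Definition vsub (x y : nat -> R) : nat -> R := fun k => x k - y k.

Definition sgn (x : R) : R :=
  if Rlt_dec 0 x then 1 else if Rlt_dec x 0 then -1 else 0.

(* extended positive reals (0,+oo]: None = +oo *)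
Definition below_cap (c : option R) (x : R) : Prop :=
  match c with None => True | Some c => x < c end.
Definition eadd (a b : option R) : option R :=
  match a, b with Some x, Some y => Some (x + y) | _, _ => None end.
Definition esum (l : list nat) (c : nat -> option R) : option R :=
  fold_right (fun k acc => eadd (c k) acc) (Some 0) l.
Definition egt1 (c : option R) : Prop :=
  match c with None => True | Some c => 1 < c end.

(* Nodes 0..nn; links are 0..nE-1, link e goes from tl e to hd e.
   mu e is the flow-density function of link e, dmu e its derivative,
   cap e its capacity C_e in (0,+oo] (None = +oo),
   paths the list of all directed paths 0 -> nn (each a list of links). *)
Record Net := mkNet {
  nn : nat; nE : nat; tl : nat -> nat; hd : nat -> nat;
  mu : nat -> R -> R; dmu : nat -> R -> R; cap : nat -> option R;
  paths : list (list nat) }.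

Section NetDefs.
Variable N : Net.

(* finite DAG, links u<v, no parallel links, node 0 the unique node without
   incoming links, node nn the unique node without outgoing links (hence
   a path from every node to nn) *)
Definition net_ok : Prop :=
  (1 <= nn N)%nat /\
  (forall e, (e < nE N)%nat -> (tl N e < hd N e)%nat /\ (hd N e <= nn N)%nat) /\
  (forall e e', (e < nE N)%nat -> (e' < nE N)%nat ->
      tl N e = tl N e' -> hd N e = hd N e' -> e = e') /\
  (forall v, (1 <= v <= nn N)%nat -> exists e, (e < nE N)%nat /\ hd N e = v) /\
  (forall v, (v < nn N)%nat -> exists e, (e < nE N)%nat /\ tl N e = v).

Definition flow_density_ok (m dm : R -> R) (c : option R) : Prop :=
  m 0 = 0 /\
  (forall x y, 0 <= x -> x < y -> m x < m y) /\
  (forall x y t, 0 <= x -> 0 <= y -> x <> y -> 0 < t < 1 ->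
       t * m x + (1 - t) * m y < m (t * x + (1 - t) * y)) /\
  (forall x, 0 < x -> derivable_pt_lim m x (dm x)) /\
  (forall eps, 0 < eps -> exists d, 0 < d /\
       forall x, 0 < x < d -> Rabs ((m x - m 0) / x - dm 0) < eps) /\
  (forall x, 0 <= x -> forall eps, 0 < eps -> exists d, 0 < d /\
       forall y, 0 <= y -> Rabs (y - x) < d -> Rabs (dm y - dm x) < eps) /\
  (match c with
   | Some cv => forall eps, 0 < eps -> exists M, forall x, M <= x -> Rabs (m x - cv) < eps
   | None => forall K, exists x, 0 <= x /\ K < m x
   end).

Definition flows_ok : Prop :=
  forall e, (e < nE N)%nat -> flow_density_ok (mu N e) (dmu N e) (cap N e).

Definition outE (v : nat) : list nat := filter (fun e => Nat.eqb (tl N e) v) (rng (nE N)).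
Definition inE (v : nat) : list nat := filter (fun e => Nat.eqb (hd N e) v) (rng (nE N)).

Definition mincut_gt1 : Prop :=
  forall U : nat -> bool, U 0%nat = true -> U (nn N) = false ->
    egt1 (esum (filter (fun e => U (tl N e) && negb (U (hd N e))) (rng (nE N))) (cap N)).

Fixpoint path_from (u : nat) (q : list nat) : Prop :=
  match q with
  | [] => u = nn N
  | e :: q' => (e < nE N)%nat /\ tl N e = u /\ path_from (hd N e) q'
  end.
Definition paths_ok : Prop :=
  NoDup (paths N) /\ forall q, In q (paths N) <-> path_from 0 q.

Definition nP : nat := length (paths N).
Definition Ainc (e p : nat) : R :=
  if existsb (Nat.eqb e) (nth p (paths N) []) then 1 else 0.
Definition fpi (pi : nat -> R) : nat -> R := fun e => sumR (rng nP) (fun p => Ainc e p * pi p).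

Definition in_simplex (pi : nat -> R) : Prop :=
  (forall k, (k < nP)%nat -> 0 <= pi k) /\ (forall k, (nP <= k)%nat -> pi k = 0) /\
  sumR (rng nP) pi = 1.
Definition in_Pi (pi : nat -> R) : Prop :=
  in_simplex pi /\ forall e, (e < nE N)%nat -> below_cap (cap N e) (fpi pi e).
Definition in_F (f : nat -> R) : Prop :=
  forall e, (e < nE N)%nat -> 0 <= f e /\ below_cap (cap N e) (f e).

Definition minv (m : R -> R) (y : R) : R :=
  epsilon (inhabits 0) (fun r => 0 <= r /\ m r = y).

(* delay, on [0, C_e) (the only region where it is used) *)
Definition Tdel (e : nat) (x : R) : R :=
  if Req_dec_T x 0 then / dmu N e 0 else minv (mu N e) x / x.

Definition cost (f omega : nat -> R) : R :=
  sumR (rng nP) (fun p => omega p * sumR (rng (nE N)) (fun e => Ainc e p * Tdel e (f e))).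

Definition Fh (Ph : (nat -> R) -> Prop) (h : (nat -> R) -> R) (f : nat -> R) : nat -> R :=
  epsilon (inhabits (fun _ => 0))
    (fun omega => Ph omega /\
       forall omega', Ph omega' -> cost f omega + h omega <= cost f omega' + h omega').

Definition nrmP (x : nat -> R) : R := nrmL (rng nP) x.
Definition dotP (x y : nat -> R) : R := sumR (rng nP) (fun k => x k * y k).
Definition in_hyp (y : nat -> R) : Prop :=
  sumR (rng nP) y = 1 /\ forall k, (nP <= k)%nat -> y k = 0.
(* tangent vectors of the hyperplane (range of Phi) *)
Definition tangent (g : nat -> R) : Prop :=
  sumR (rng nP) g = 0 /\ forall k, (nP <= k)%nat -> g k = 0.
Definition rel_int (S : (nat -> R) -> Prop) (x : nat -> R) : Prop :=
  S x /\ exists d, 0 < d /\ forall y, in_hyp y -> nrmP (vsub y x) < d -> S y.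
Definition closedP (S : (nat -> R) -> Prop) : Prop :=
  forall x, (forall k, (nP <= k)%nat -> x k = 0) ->
    (forall d, 0 < d -> exists y, S y /\ nrmP (vsub y x) < d) -> S x.
Definition convexP (S : (nat -> R) -> Prop) : Prop :=
  forall x y t, S x -> S y -> 0 <= t <= 1 -> S (fun k => t * x k + (1 - t) * y k).
(* g is the projected gradient Phi grad h(x) of h at x (along the hyperplane) *)
Definition has_tgrad (S : (nat -> R) -> Prop) (h : (nat -> R) -> R) (x g : nat -> R) : Prop :=
  tangent g /\
  forall eps, 0 < eps -> exists d, 0 < d /\ forall y, S y -> in_hyp y ->
    nrmP (vsub y x) < d -> Rabs (h y - h x - dotP g (vsub y x)) <= eps * nrmP (vsub y x).
(* the gradient map g is differentiable at x (h is twice differentiable) *)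
Definition grad_diff (S : (nat -> R) -> Prop) (g : (nat -> R) -> (nat -> R)) (x : nat -> R) : Prop :=
  exists Hs : nat -> nat -> R,
  forall eps, 0 < eps -> exists d, 0 < d /\ forall y, S y -> in_hyp y ->
    nrmP (vsub y x) < d ->
    nrmP (fun k => g y k - g x k - sumR (rng nP) (fun j => Hs k j * (y j - x j)))
      <= eps * nrmP (vsub y x).
Definition admissible (Ph : (nat -> R) -> Prop) (h : (nat -> R) -> R) : Prop :=
  (forall x, Ph x -> in_Pi x) /\ closedP Ph /\ convexP Ph /\ (exists x, rel_int Ph x) /\
  (forall x y t, Ph x -> Ph y -> (exists k, (k < nP)%nat /\ x k <> y k) -> 0 < t < 1 ->
     h (fun k => t * x k + (1 - t) * y k) < t * h x + (1 - t) * h y) /\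
  exists g : (nat -> R) -> (nat -> R),
    (forall x, rel_int Ph x -> has_tgrad Ph h x (g x)) /\
    (forall x, rel_int Ph x -> grad_diff Ph g x) /\
    (forall xb, Ph xb -> ~ rel_int Ph xb -> forall M, exists d, 0 < d /\
       forall x, rel_int Ph x -> nrmP (vsub x xb) < d -> M < nrmP (g x)).

(* G v f pi e = G^v_e(f_{E_v^+}, pi); f_{E_v^+} is encoded as the vector f
   restricted to outE v (zero elsewhere) *)
Definition restr (v : nat) (f : nat -> R) : nat -> R :=
  fun e => if Nat.eqb (tl N e) v && Nat.ltb e (nE N) then f e else 0.
Definition in_Fv (v : nat) (f : nat -> R) : Prop :=
  (forall e, In e (outE v) -> 0 <= f e /\ below_cap (cap N e) (f e)) /\
  (forall e, ~ In e (outE v) -> f e = 0).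

Definition G_ok (G : nat -> (nat -> R) -> (nat -> R) -> (nat -> R)) : Prop :=
  forall v, (v < nn N)%nat ->
  (forall f pi, in_Fv v f -> in_Pi pi ->
     (forall e, In e (outE v) -> 0 <= G v f pi e) /\ sumR (outE v) (G v f pi) = 1) /\
  (forall pi, in_Pi pi -> forall e, In e (outE v) ->
     sumR (outE v) (fpi pi) * G v (restr v (fpi pi)) pi e = fpi pi e) /\
  (exists (dGf dGp : nat -> (nat -> R) -> (nat -> R) -> nat -> R),
    (forall j, In j (outE v) -> forall f pi, in_Fv v f -> in_Pi pi ->
       forall eps, 0 < eps -> exists d, 0 < d /\ forall f' pi', in_Fv v f' -> in_Pi pi' ->
         nrmL (outE v) (vsub f' f) + nrmP (vsub pi' pi) < d ->
         Rabs (G v f' pi' j - G v f pi j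
               - sumR (outE v) (fun k => dGf j f pi k * (f' k - f k))
               - sumR (rng nP) (fun p => dGp j f pi p * (pi' p - pi p)))
         <= eps * (nrmL (outE v) (vsub f' f) + nrmP (vsub pi' pi))) /\
    (forall j, In j (outE v) -> forall f pi, in_Fv v f -> in_Pi pi ->
       forall eps, 0 < eps -> exists d, 0 < d /\ forall f' pi', in_Fv v f' -> in_Pi pi' ->
         nrmL (outE v) (vsub f' f) + nrmP (vsub pi' pi) < d ->
         (forall k, In k (outE v) -> Rabs (dGf j f' pi' k - dGf j f pi k) < eps) /\
         (forall p, (p < nP)%nat -> Rabs (dGp j f' pi' p - dGp j f pi p) < eps)) /\
    (forall f pi, in_Fv v f -> in_Pi pi -> forall j e, In j (outE v) -> In e (outE v) ->
       j <> e -> 0 <= dGf j f pi e)).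

Definition Hfield (G : nat -> (nat -> R) -> (nat -> R) -> (nat -> R))
    (f pi : nat -> R) (e : nat) : R :=
  let v := tl N e in
  if Nat.eqb v 0 then G 0%nat (restr 0 f) pi e - f e
  else sumR (inE v) f * G v (restr v f) pi e - f e.

Definition fvec (rho : nat -> R) : nat -> R := fun e => mu N e (rho e).

Definition admissible_init (pi rho : R -> (nat -> R)) : Prop :=
  in_Pi (pi 0) /\ (forall k, (k < nP)%nat -> 0 < pi 0 k) /\
  (forall e, (e < nE N)%nat -> 0 < rho 0 e).

Definition is_solution (G : nat -> (nat -> R) -> (nat -> R) -> (nat -> R))
    (Ph : (nat -> R) -> Prop) (h : (nat -> R) -> R) (eta : R)
    (pi rho : R -> (nat -> R)) : Prop :=
  (forall t, 0 <= t -> in_Pi (pi t) /\ (forall e, (e < nE N)%nat -> 0 <= rho t e) /\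
                       in_F (fvec (rho t))) /\
  (forall t, 0 < t -> forall k, (k < nP)%nat ->
     derivable_pt_lim (fun s => pi s k) t (eta * (Fh Ph h (fvec (rho t)) k - pi t k))) /\
  (forall t, 0 < t -> forall e, (e < nE N)%nat ->
     derivable_pt_lim (fun s => rho s e) t (Hfield G (fvec (rho t)) (pi t) e)) /\
  (forall k, (k < nP)%nat -> forall eps, 0 < eps -> exists d, 0 < d /\
     forall s, 0 <= s < d -> Rabs (pi s k - pi 0 k) < eps) /\
  (forall e, (e < nE N)%nat -> forall eps, 0 < eps -> exists d, 0 < d /\
     forall s, 0 <= s < d -> Rabs (rho s e - rho 0 e) < eps).

Definition rhopi (pi : nat -> R) (e : nat) : R := minv (mu N e) (fpi pi e).
(* dW/dpi_p *)
Definition gradW (alpha : R) (rho pi : nat -> R) (p : nat) : R :=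
  - sumR (rng (nn N)) (fun v => alpha ^ v *
      sumR (outE v) (fun e => sgn (rho e - rhopi pi e) * Ainc e p / dmu N e (rhopi pi e))).
Definition Phi (x : nat -> R) : nat -> R :=
  fun p => x p - / INR nP * sumR (rng nP) x.

End NetDefs.

(* Main.v *)
Require Import Defs.
From Stdlib Require Import Reals Lra Lia List Arith Bool ClassicalEpsilon Classical FunctionalExtensionality Ranalysis5 Rtopology ZArith.
Import ListNotations.
Open Scope R_scope.

Lemma sumR_cons a l f : sumR (a :: l) f = f a + sumR l f.
Proof. reflexivity. Qed.
Lemma sumR_nil f : sumR [] f = 0.
Proof. reflexivity. Qed.

Lemma sumR_ext l f g : (forall k, In k l -> f k = g k) -> sumR l f = sumR l g.
Proof. induction l; simpl; intros; auto. rewrite H, IHl; auto. Qed.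

Lemma sumR_plus l f g : sumR l (fun k => f k + g k) = sumR l f + sumR l g.
Proof. induction l; simpl; intros; [lra|]. rewrite IHl; lra. Qed.

Lemma sumR_minus l f g : sumR l (fun k => f k - g k) = sumR l f - sumR l g.
Proof. induction l; simpl; intros; [lra|]. rewrite IHl; lra. Qed.

Lemma sumR_scal l c f : sumR l (fun k => c * f k) = c * sumR l f.
Proof. induction l; simpl; intros; [lra|]. rewrite IHl; lra. Qed.

Lemma sumR_scalr l c f : sumR l (fun k => f k * c) = sumR l f * c.
Proof. induction l; simpl; intros; [lra|]. rewrite IHl; lra. Qed.

Lemma sumR_le l f g : (forall k, In k l -> f k <= g k) -> sumR l f <= sumR l g.
Proof. induction l; simpl; intros; [lra|]. pose proof (H a (or_introl eq_refl)).
  pose proof (IHl (fun k h => H k (or_intror h))). lra. Qed.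

Lemma sumR_nonneg l f : (forall k, In k l -> 0 <= f k) -> 0 <= sumR l f.
Proof. intros. replace 0 with (sumR l (fun _ => 0)). apply sumR_le; auto.
  induction l; simpl; auto; rewrite IHl; auto; try lra. intros; apply H; simpl; auto. Qed.

Lemma sumR_zero l f : (forall k, In k l -> f k = 0) -> sumR l f = 0.
Proof. induction l; simpl; intros; auto. rewrite H, IHl; auto; lra. Qed.

Lemma sumR_abs l f : Rabs (sumR l f) <= sumR l (fun k => Rabs (f k)).
Proof. induction l; simpl. rewrite Rabs_R0; lra.
  eapply Rle_trans. apply Rabs_triang. lra. Qed.

Lemma sumR_swap l1 l2 (F : nat -> nat -> R) :
  sumR l1 (fun i => sumR l2 (fun j => F i j)) = sumR l2 (fun j => sumR l1 (fun i => F i j)).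
Proof. induction l1; simpl. rewrite sumR_zero; auto.
  rewrite IHl1. rewrite <- sumR_plus. reflexivity. Qed.

Lemma sumR_filter_le (P : nat -> bool) l f : (forall k, In k l -> 0 <= f k) ->
  sumR (filter P l) f <= sumR l f.
Proof. induction l; simpl; intros; [lra|]. destruct (P a); simpl.
  pose proof (IHl (fun k h => H k (or_intror h))); lra.
  pose proof (IHl (fun k h => H k (or_intror h))); pose proof (H a (or_introl eq_refl)); lra. Qed.

Lemma sumR_deriv l (F : R -> nat -> R) (D : nat -> R) t :
  (forall k, In k l -> derivable_pt_lim (fun s => F s k) t (D k)) ->
  derivable_pt_lim (fun s => sumR l (F s)) t (sumR l D).
Proof. induction l; simpl; intros.
  apply derivable_pt_lim_const.
  apply (derivable_pt_lim_plus (fun s => F s a) (fun s => sumR l (F s))); auto. Qed.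

Lemma sumR_cv l (F : nat -> nat -> R) (L : nat -> R) :
  (forall k, In k l -> Un_cv (fun n => F n k) (L k)) ->
  Un_cv (fun n => sumR l (F n)) (sumR l L).
Proof. induction l; simpl; intros.
  intros e He; exists 0%nat; intros; unfold Rdist; rewrite Rminus_diag, Rabs_R0; auto.
  apply (CV_plus (fun n => F n a) (fun n => sumR l (F n))); auto. Qed.

Lemma sumR_rcont l (F : R -> nat -> R) :
  (forall k, In k l -> forall eps, 0 < eps -> exists d, 0 < d /\
     forall s, 0 <= s < d -> Rabs (F s k - F 0 k) < eps) ->
  forall eps, 0 < eps -> exists d, 0 < d /\
     forall s, 0 <= s < d -> Rabs (sumR l (F s) - sumR l (F 0)) < eps.
Proof. induction l; simpl; intros.
  exists 1; split; [lra|]; intros; rewrite Rminus_diag, Rabs_R0; auto.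
  destruct (H a (or_introl eq_refl) (eps/2)) as [d1 [Hd1 H1]]; [lra|].
  destruct (IHl (fun k h => H k (or_intror h)) (eps/2)) as [d2 [Hd2 H2]]; [lra|].
  exists (Rmin d1 d2); split. apply Rmin_pos; auto. intros s Hs.
  assert (0 <= s < d1) by (pose proof (Rmin_l d1 d2); lra).
  assert (0 <= s < d2) by (pose proof (Rmin_r d1 d2); lra).
  specialize (H1 s H3); specialize (H2 s H4).
  replace (F s a + sumR l (F s) - (F 0 a + sumR l (F 0))) with
    ((F s a - F 0 a) + (sumR l (F s) - sumR l (F 0))) by ring.
  eapply Rle_lt_trans. apply Rabs_triang. lra. Qed.

Lemma in_rng k n : In k (rng n) <-> (k < n)%nat.
Proof. unfold rng. rewrite in_seq. lia. Qed.

Lemma le_div a b c : 0 < c -> a * c <= b -> a <= b / c.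
Proof. intros. replace a with (a * c / c) by (field; lra).
  unfold Rdiv; apply Rmult_le_compat_r; [left; apply Rinv_0_lt_compat|]; lra. Qed.
Lemma div_le a b c : 0 < c -> a <= b * c -> a / c <= b.
Proof. intros. replace b with (b * c / c) by (field; lra).
  unfold Rdiv; apply Rmult_le_compat_r; [left; apply Rinv_0_lt_compat|]; lra. Qed.

Lemma term_le_sum l f k : (forall j, In j l -> 0 <= f j) -> In k l -> f k <= sumR l f.
Proof. induction l; simpl; intros; [contradiction|]. destruct H0.
  subst. pose proof (sumR_nonneg l f (fun j h => H j (or_intror h))). lra.
  pose proof (IHl (fun j h => H j (or_intror h)) H0). pose proof (H a (or_introl eq_refl)). lra. Qed.

Lemma sumR_bound l f b : (forall k, In k l -> f k <= b) -> sumR l f <= INR (length l) * b.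
Proof. induction l; intros. simpl; lra.
  change (length (a::l)) with (S (length l)); rewrite S_INR. rewrite sumR_cons.
  pose proof (IHl (fun j h => H j (or_intror h))). pose proof (H a (or_introl eq_refl)).
  lra. Qed.

Lemma sumR_app l1 l2 f : sumR (l1 ++ l2) f = sumR l1 f + sumR l2 f.
Proof. induction l1; simpl. lra. rewrite IHl1; lra. Qed.

Lemma sumR_sq_le l f : sumR l (fun k => f k ^ 2) <= (sumR l (fun k => Rabs (f k))) ^ 2.
Proof. induction l. simpl; lra. rewrite !sumR_cons.
  pose proof (sumR_nonneg l (fun k => Rabs (f k)) (fun k _ => Rabs_pos (f k))).
  pose proof (Rabs_pos (f a)).
  assert (f a ^ 2 = Rabs (f a) ^ 2) by (simpl; rewrite Rmult_1_r, Rmult_1_r; rewrite <- Rabs_mult; rewrite Rabs_right; [auto| pose proof (Rle_0_sqr (f a)); unfold Rsqr in *; lra]).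
  rewrite H1. simpl in *. nra. Qed.

Lemma nrmL_le_l1 l v : nrmL l v <= sumR l (fun k => Rabs (v k)).
Proof. unfold nrmL. pose proof (sumR_nonneg l (fun k => Rabs (v k)) (fun k _ => Rabs_pos (v k))).
  rewrite <- (sqrt_pow2 (sumR l (fun k => Rabs (v k)))) by auto.
  apply sqrt_le_1_alt. apply sumR_sq_le. Qed.

Lemma nrmL_nonneg l v : 0 <= nrmL l v.
Proof. apply sqrt_pos. Qed.

Lemma nrmL_scal l t v : nrmL l (fun k => t * v k) = Rabs t * nrmL l v.
Proof. unfold nrmL. replace (sumR l (fun k => (t * v k) ^ 2)) with (t ^ 2 * sumR l (fun k => v k ^ 2)).
  rewrite sqrt_mult_alt. rewrite <- sqrt_Rsqr_abs. unfold Rsqr. simpl. rewrite Rmult_1_r. auto.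
  simpl; rewrite Rmult_1_r; apply Rle_0_sqr.
  rewrite <- sumR_scal. apply sumR_ext; intros; ring. Qed.

Lemma nrmL_ext l v w : (forall k, In k l -> v k = w k) -> nrmL l v = nrmL l w.
Proof. intros. unfold nrmL. f_equal. apply sumR_ext. intros. rewrite H; auto. Qed.

Lemma Rabs_le_inv a b : Rabs a <= b -> - b <= a <= b.
Proof. intros. pose proof (Rle_abs a). pose proof (Rle_abs (- a)). rewrite Rabs_Ropp in H1. lra. Qed.

Lemma inv_cv : Un_cv (fun n => / INR (S n)) 0.
Proof. intros e He. destruct (archimed (/ e)) as [Ha _].
  assert (0 <= IZR (up (/ e))) by (pose proof (Rinv_0_lt_compat e He); lra).
  exists (Z.to_nat (up (/ e))). intros n Hn. unfold Rdist. rewrite Rminus_0_r.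
  rewrite Rabs_right by (left; apply Rinv_0_lt_compat, lt_0_INR; lia).
  rewrite <- (Rinv_inv e). apply Rinv_lt_contravar.
  apply Rmult_lt_0_compat. apply Rinv_0_lt_compat; auto. apply lt_0_INR; lia.
  apply (Rlt_le_trans _ (IZR (up (/ e)))); auto.
  rewrite <- (Z2Nat.id (up (/ e))) by (apply le_IZR; auto). rewrite <- INR_IZR_INZ.
  apply le_INR. lia. Qed.

Lemma le_lim a b (u : nat -> R) : (forall n, a <= b + u n) -> Un_cv u 0 -> a <= b.
Proof. intros H Hu. destruct (Rle_dec a b); auto. exfalso.
  destruct (Hu (a - b) ltac:(lra)) as [N HN]. specialize (HN N (Nat.le_refl _)). specialize (H N).
  unfold Rdist in HN. rewrite Rminus_0_r in HN. pose proof (Rle_abs (u N)). lra. Qed.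

Lemma cv_plus0 u v : Un_cv u 0 -> Un_cv v 0 -> Un_cv (fun n => u n + v n) 0.
Proof. intros. replace 0 with (0 + 0) by ring. apply CV_plus; auto. Qed.

Lemma cv_scal0 c u : Un_cv u 0 -> Un_cv (fun n => c * u n) 0.
Proof. intros. replace 0 with (c * 0) by ring. apply CV_mult; auto.
  intros e He; exists 0%nat; intros; unfold Rdist; rewrite Rminus_diag, Rabs_R0; auto. Qed.

Lemma rng_S n : rng (S n) = rng n ++ [n].
Proof. unfold rng. rewrite seq_S. auto. Qed.

Lemma sum_ind n i : (i < n)%nat -> sumR (rng n) (fun k => if Nat.eqb k i then 1 else 0) = 1.
Proof. induction n; intros. lia. rewrite rng_S, sumR_app. simpl.
  destruct (Nat.eqb_spec n i).
  - subst. rewrite sumR_zero. lra. intros k Hk. apply in_rng in Hk. destruct (Nat.eqb_spec k i); [lia|auto].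
  - rewrite IHn by lia. lra. Qed.

Lemma sum_pick n i a : (i < n)%nat -> sumR (rng n) (fun k => a k * (if Nat.eqb k i then 1 else 0)) = a i.
Proof. induction n; intros. lia. rewrite rng_S, sumR_app. simpl.
  destruct (Nat.eqb_spec n i).
  - subst. rewrite sumR_zero. lra. intros k Hk. apply in_rng in Hk. destruct (Nat.eqb_spec k i); [lia|ring].
  - rewrite IHn by lia. lra. Qed.

Section FD.
Variables (m dm : R -> R) (c : option R).
Hypothesis H : flow_density_ok m dm c.

Lemma fd_incr x y : 0 <= x -> x <= y -> m x <= m y.
Proof. destruct H as [_ [Hi _]]. intros. destruct (Req_dec x y). subst; lra.
  left; apply Hi; lra. Qed.

Lemma fd_m0 : m 0 = 0.
Proof. apply H. Qed.

Lemma fd_conc x y s : 0 <= x -> x < y -> 0 < s < y - x ->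
  m (x + s) - m x >= s / (y - x) * (m y - m x).
Proof. intros. destruct H as [_ [_ [Hc _]]].
  set (t := 1 - s / (y - x)).
  assert (Hs : 0 < s / (y - x) < 1). { split. apply Rdiv_lt_0_compat; lra.
    apply (Rmult_lt_reg_r (y - x)); [lra|]. unfold Rdiv; rewrite Rmult_assoc, Rinv_l; lra. }
  assert (0 < t < 1) by (unfold t; lra).
  assert (x <> y) by lra.
  specialize (Hc x y t H0 ltac:(lra) H4 H3).
  assert (t * x + (1 - t) * y = x + s).
  { unfold t. field_simplify; [|lra]. unfold Rdiv. field_simplify_eq; [|lra]. ring. }
  rewrite H5 in Hc. unfold t in Hc. lra. Qed.

Lemma fd_slope x y : 0 <= x -> x < y -> (m y - m x) / (y - x) <= dm x.
Proof. intros Hx Hxy. set (S := (m y - m x) / (y - x)).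
  destruct (Rle_dec S (dm x)) as [|Hn]; auto. exfalso.
  assert (He : 0 < S - dm x) by lra.
  assert (Key : forall s, 0 < s < y - x -> S <= (m (x + s) - m x) / s).
  { intros s Hs. pose proof (fd_conc x y s Hx Hxy Hs).
    apply le_div; [lra|].
    unfold S. replace ((m y - m x) / (y - x) * s) with (s / (y - x) * (m y - m x)); [lra|].
    unfold Rdiv; ring. }
  destruct (Req_dec x 0) as [Hx0|Hx0].
  - subst x. destruct H as [_ [_ [_ [_ [Hr _]]]]].
    destruct (Hr _ He) as [d [Hd Hd']].
    set (s := Rmin d y / 2).
    assert (0 < s < d) by (unfold s; pose proof (Rmin_l d y); pose proof (Rmin_r d y);
      assert (0 < Rmin d y) by (apply Rmin_pos; lra); lra).
    assert (0 < s < y - 0) by (unfold s; pose proof (Rmin_l d y); pose proof (Rmin_r d y);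
      assert (0 < Rmin d y) by (apply Rmin_pos; lra); lra).
    specialize (Hd' s H0). specialize (Key s H1). rewrite Rplus_0_l in Key.
    apply Rabs_def2 in Hd'. lra.
  - destruct H as [_ [_ [_ [Hd _]]]].
    specialize (Hd x ltac:(lra) _ He) as [d Hd'].
    set (s := Rmin d (y - x) / 2).
    assert (0 < Rmin d (y - x)) by (apply Rmin_pos; [apply cond_pos|lra]).
    assert (0 < s < d) by (unfold s; pose proof (Rmin_l d (y-x)); lra).
    assert (0 < s < y - x) by (unfold s; pose proof (Rmin_r d (y-x)); lra).
    specialize (Hd' s ltac:(lra) ltac:(rewrite Rabs_right; lra)).
    specialize (Key s H2). apply Rabs_def2 in Hd'. lra. Qed.

Lemma fd_cont x : 0 < x -> continuity_pt m x.
Proof. intros. destruct H as [_ [_ [_ [Hd _]]]]. apply derivable_continuous_pt.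
  exists (dm x). apply Hd; auto. Qed.

Lemma fd_small y : 0 < y -> exists a, 0 < a /\ m a < y.
Proof. intros. destruct H as [Hm0 [_ [_ [_ [Hr _]]]]].
  destruct (Hr 1 ltac:(lra)) as [d [Hd Hd']].
  set (a := Rmin (d/2) (y / (2 * (Rabs (dm 0) + 1)))).
  assert (0 < Rabs (dm 0) + 1) by (pose proof (Rabs_pos (dm 0)); lra).
  assert (Ha : 0 < a) by (apply Rmin_pos; [lra| apply Rdiv_lt_0_compat; lra]).
  exists a; split; auto. specialize (Hd' a ltac:(split; [lra|pose proof (Rmin_l (d/2) (y / (2 * (Rabs (dm 0) + 1)))); unfold a in *; lra])).
  rewrite Hm0 in Hd'. apply Rabs_def2 in Hd'. destruct Hd' as [Hd' _].
  assert (K1 : m a / a < Rabs (dm 0) + 1) by (pose proof (Rle_abs (dm 0)); lra).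
  assert (K2 : m a < a * (Rabs (dm 0) + 1)).
  { apply (Rmult_lt_reg_r (/ a)). apply Rinv_0_lt_compat; auto.
    replace (a * (Rabs (dm 0) + 1) * / a) with (Rabs (dm 0) + 1) by (field; lra). exact K1. }
  assert (K3 : a <= y / (2 * (Rabs (dm 0) + 1))) by apply Rmin_r.
  assert (a * (Rabs (dm 0) + 1) <= y / 2).
  { apply (Rmult_le_compat_r (Rabs (dm 0) + 1)) in K3; [|lra].
    replace (y / (2 * (Rabs (dm 0) + 1)) * (Rabs (dm 0) + 1)) with (y/2) in K3 by (field; lra). auto. }
  lra. Qed.

Lemma fd_big tau : below_cap c tau -> exists R, 0 < R /\ tau < m R.
Proof. intros Hb. destruct H as [Hm0 [Hi [_ [_ [_ [_ Hc]]]]]]. destruct c as [cv|].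
  - simpl in Hb. destruct (Hc (cv - tau) ltac:(lra)) as [M HM].
    exists (Rmax M 1). split. pose proof (Rmax_r M 1); lra.
    specialize (HM (Rmax M 1) (Rmax_l M 1)). apply Rabs_def2 in HM. lra.
  - destruct (Hc tau) as [x [Hx Hx']]. exists (Rmax x 1). split. pose proof (Rmax_r x 1); lra.
    destruct (Rle_lt_or_eq_dec x (Rmax x 1) (Rmax_l x 1)). specialize (Hi x (Rmax x 1) Hx r). lra.
    rewrite <- e; auto. Qed.

Lemma fd_inv y : 0 <= y -> below_cap c y -> exists r, 0 <= r /\ m r = y.
Proof. intros Hy Hb. destruct (Req_dec y 0). exists 0; split; [lra|]. rewrite fd_m0; auto.
  destruct (fd_small y ltac:(lra)) as [a [Ha Hma]].
  destruct (fd_big y Hb) as [R0 [HR HmR]].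
  set (X := Rmax R0 (a + 1)).
  assert (HX : y < m X). { pose proof (fd_incr R0 X ltac:(lra) (Rmax_l _ _)). lra. }
  assert (a < X) by (pose proof (Rmax_r R0 (a+1)); unfold X; lra).
  destruct (IVT_interv (fun z => m z - y) a X) as [z [Hz Hz']]; auto.
  - intros b Hb'. apply continuity_pt_minus. apply fd_cont; lra. apply continuity_pt_const. intros u v; auto.
  - simpl; lra.
  - simpl; lra.
  - exists z; split; [lra|]. simpl in Hz'. lra. Qed.

Lemma minv_spec y : 0 <= y -> below_cap c y -> 0 <= minv m y /\ m (minv m y) = y.
Proof. intros. unfold minv. apply (epsilon_spec (inhabits 0) (fun r => 0 <= r /\ m r = y)).
  apply fd_inv; auto. Qed.

Lemma fd_dmu_lb tau : below_cap c tau -> exists d, 0 < d /\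
  forall y, 0 <= y -> y <= tau -> d <= dm (minv m y).
Proof. intros Hb. destruct (fd_big tau Hb) as [R [HR HmR]].
  assert (HR1 : m R < m (R + 1)) by (apply H; lra).
  exists ((m (R + 1) - m R) / (R + 1)). split. apply Rdiv_lt_0_compat; lra.
  intros y Hy Hyt.
  assert (Hby : below_cap c y) by (destruct c; simpl in *; auto; lra).
  destruct (minv_spec y Hy Hby) as [Hr Hmr]. set (r := minv m y) in *.
  assert (r < R). { destruct (Rlt_le_dec r R); auto. pose proof (fd_incr R r ltac:(lra) r0). lra. }
  pose proof (fd_slope r (R + 1) Hr ltac:(lra)).
  assert (m r <= m R) by (apply fd_incr; lra).
  eapply Rle_trans; [|exact H1].
  apply (Rle_trans _ ((m (R + 1) - m r) / (R + 1))).
  unfold Rdiv; apply Rmult_le_compat_r. left; apply Rinv_0_lt_compat; lra. lra.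
  unfold Rdiv; apply Rmult_le_compat_l. lra.
  apply Rinv_le_contravar; lra. Qed.
End FD.

Lemma incr_ge (psi : nat -> nat) : (forall n, (psi n < psi (S n))%nat) -> forall n, (n <= psi n)%nat.
Proof. intros H n; induction n. lia. specialize (H n); lia. Qed.

Lemma incr_mono (psi : nat -> nat) : (forall n, (psi n < psi (S n))%nat) -> forall n m, (n <= m)%nat -> (psi n <= psi m)%nat.
Proof. intros H n m Hnm; induction Hnm. lia. specialize (H m); lia. Qed.

Lemma cv_sub (u : nat -> R) l (psi : nat -> nat) : (forall n, (psi n < psi (S n))%nat) ->
  Un_cv u l -> Un_cv (fun n => u (psi n)) l.
Proof. intros Hp Hu e He. destruct (Hu e He) as [N HN]. exists N. intros n Hn.
  apply HN. pose proof (incr_ge psi Hp n). lia. Qed.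

Lemma BW1 (u : nat -> R) : (forall n, 0 <= u n <= 1) ->
  exists (psi : nat -> nat) l, (forall n, (psi n < psi (S n))%nat) /\ Un_cv (fun n => u (psi n)) l.
Proof. intros Hu. destruct (Bolzano_Weierstrass u (fun c => 0 <= c <= 1) (compact_P3 0 1) Hu) as [l Hl].
  assert (Hsel : forall N (k : nat), exists p, (N <= p)%nat /\ Rabs (u p - l) < / INR (S k)).
  { intros N k. assert (Hk : 0 < / INR (S k)) by (apply Rinv_0_lt_compat; apply lt_0_INR; lia).
    destruct (Hl (fun y => Rabs (y - l) < / INR (S k)) N) as [p [Hp Hp']].
    exists (mkposreal _ Hk). intros y Hy. unfold disc in Hy. simpl in Hy. exact Hy.
    exists p; auto. }
  set (sel := fun N k => epsilon (inhabits 0%nat) (fun p => (N <= p)%nat /\ Rabs (u p - l) < / INR (S k))).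
  assert (Hs : forall N k, (N <= sel N k)%nat /\ Rabs (u (sel N k) - l) < / INR (S k)).
  { intros. apply (epsilon_spec (inhabits 0%nat) (fun p => (N <= p)%nat /\ Rabs (u p - l) < / INR (S k))). apply Hsel. }
  set (psi := fix psi n := match n with 0 => sel 0%nat 0%nat | S n' => sel (S (psi n')) (S n') end).
  exists psi, l. split.
  - intros n. simpl. destruct (Hs (S (psi n)) (S n)). lia.
  - assert (Hb : forall n, Rabs (u (psi n) - l) < / INR (S n)).
    { intros [|n]; simpl. apply Hs. apply Hs. }
    intros e He. destruct (archimed (/ e)) as [Ha _].
    assert (0 <= IZR (up (/ e))) by (pose proof (Rinv_0_lt_compat e He); lra).
    exists (Z.to_nat (up (/ e))). intros n Hn. unfold Rdist.
    eapply Rlt_trans. apply Hb.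
    rewrite <- (Rinv_inv e). apply Rinv_lt_contravar.
    apply Rmult_lt_0_compat. apply Rinv_0_lt_compat; auto. apply lt_0_INR; lia.
    apply (Rlt_le_trans _ (IZR (up (/ e)))); auto.
    rewrite <- (Z2Nat.id (up (/ e))) by (apply le_IZR; auto). rewrite <- INR_IZR_INZ.
    apply le_INR. lia. Qed.

Lemma BWn (x : nat -> nat -> R) : (forall n k, 0 <= x n k <= 1) -> forall m,
  exists (phi : nat -> nat) (L : nat -> R), (forall n, (phi n < phi (S n))%nat) /\
    forall k, (k < m)%nat -> Un_cv (fun n => x (phi n) k) (L k).
Proof. intros Hx m. induction m.
  - exists (fun n => n), (fun _ => 0). split. intros; lia. intros; lia.
  - destruct IHm as [phi [L [Hphi HL]]].
    destruct (BW1 (fun n => x (phi n) m) (fun n => Hx _ _)) as [psi [l [Hpsi Hl]]].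
    exists (fun n => phi (psi n)), (fun k => if Nat.eqb k m then l else L k). split.
    + intros n. pose proof (Hpsi n). pose proof (incr_mono phi Hphi (S (psi n)) (psi (S n)) ltac:(lia)).
      pose proof (Hphi (psi n)). lia.
    + intros k Hk. destruct (Nat.eqb_spec k m). subst; auto.
      apply (cv_sub (fun n => x (phi n) k)); auto. apply HL; lia. Qed.

Section Conv.
Variable N : Net.
Notation nP := (nP N).
Notation rP := (rng (Defs.nP N)).

Lemma simplex_coord x : in_simplex N x -> forall k, 0 <= x k <= 1.
Proof. intros [H1 [H2 H3]] k. destruct (lt_dec k nP).
  split. auto. rewrite <- H3. apply term_le_sum. intros j Hj; apply H1; apply in_rng; auto. apply in_rng; auto.
  rewrite H2; [lra|lia]. Qed.

Lemma simplex_hyp x : in_simplex N x -> in_hyp N x.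
Proof. intros [H1 [H2 H3]]. split; auto. Qed.

Lemma vsub_comb x y t : forall k, vsub (fun k => t * y k + (1 - t) * x k) x k = t * vsub y x k.
Proof. intros; unfold vsub; ring. Qed.

Lemma nrmP_comb x y t : nrmP N (vsub (fun k => t * y k + (1 - t) * x k) x) = Rabs t * nrmP N (vsub y x).
Proof. unfold nrmP. rewrite <- nrmL_scal. apply nrmL_ext. intros; apply vsub_comb. Qed.

Lemma hyp_comb x y t : in_hyp N x -> in_hyp N y -> in_hyp N (fun k => t * y k + (1 - t) * x k).
Proof. intros [Hx1 Hx2] [Hy1 Hy2]. split. rewrite sumR_plus, sumR_scal, sumR_scal. rewrite Hx1, Hy1; ring.
  intros. rewrite Hx2, Hy2; auto; ring. Qed.

Lemma eps_arg A B C : 0 <= B -> (forall eps, 0 < eps -> A - eps * B <= C) -> A <= C.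
Proof. intros HB H. destruct (Rle_dec A C); auto. exfalso.
  specialize (H ((A - C) / (2 * (B + 1))) ltac:(apply Rdiv_lt_0_compat; lra)).
  assert ((A - C) / (2 * (B + 1)) * B <= (A - C) / 2).
  { unfold Rdiv. rewrite Rinv_mult. replace ((A - C) * (/ 2 * / (B + 1)) * B) with ((A - C) / 2 * (B / (B + 1))) by (field; lra).
    replace ((A - C) * / 2) with ((A - C) / 2 * 1) by field. apply Rmult_le_compat_l. lra.
    apply div_le; lra. }
  lra. Qed.

Variables (Ph : (nat -> R) -> Prop) (h : (nat -> R) -> R).

Lemma conv_ns : admissible N Ph h -> forall x y t, Ph x -> Ph y -> 0 < t < 1 ->
  h (fun k => t * x k + (1 - t) * y k) <= t * h x + (1 - t) * h y.
Proof. intros [HPi [_ [_ [_ [Hs _]]]]] x y t Hx Hy Ht.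
  destruct (classic (exists k, (k < nP)%nat /\ x k <> y k)).
  left; apply Hs; auto.
  assert (x = y). { apply functional_extensionality; intros k. destruct (lt_dec k nP).
    destruct (Req_dec (x k) (y k)); auto. exfalso; apply H; eauto.
    destruct (HPi x Hx) as [[_ [H1 _]] _]. destruct (HPi y Hy) as [[_ [H2 _]] _]. rewrite H1, H2; auto; lia. }
  subst. replace (fun k => t * y k + (1 - t) * y k) with y. lra.
  apply functional_extensionality; intros; ring. Qed.

Lemma grad_ineq : admissible N Ph h -> forall x gx y, Ph x -> has_tgrad N Ph h x gx -> Ph y ->
  h x + dotP N gx (vsub y x) <= h y.
Proof. intros Had x gx y Hx [_ Hg] Hy.
  pose proof Had as [HPi [_ [Hcv _]]].
  assert (Hhx : in_hyp N x) by (apply simplex_hyp; apply HPi; auto).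
  assert (Hhy : in_hyp N y) by (apply simplex_hyp; apply HPi; auto).
  set (v := vsub y x). set (nv := nrmP N v).
  assert (Hnv : 0 <= nv) by apply nrmL_nonneg.
  cut (dotP N gx v <= h y - h x). lra.
  apply (eps_arg _ nv); auto. intros eps He.
  destruct (Hg eps He) as [d [Hd Hd']].
  set (t := Rmin (1/2) (d / (2 * (nv + 1)))).
  assert (Ht : 0 < t < 1). { split. apply Rmin_pos; [lra|apply Rdiv_lt_0_compat; lra]. pose proof (Rmin_l (1/2) (d / (2 * (nv + 1)))); unfold t; lra. }
  set (w := fun k => t * y k + (1 - t) * x k).
  assert (Hw : Ph w) by (apply Hcv; auto; lra).
  assert (Hnw : nrmP N (vsub w x) = t * nv) by (unfold w; rewrite nrmP_comb; rewrite Rabs_right; [auto|lra]).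
  assert (t * nv < d).
  { assert (t <= d / (2 * (nv + 1))) by apply Rmin_r.
    apply (Rle_lt_trans _ (d / (2 * (nv + 1)) * nv)). apply Rmult_le_compat_r; auto.
    unfold Rdiv. replace (d * / (2 * (nv + 1)) * nv) with (d * (nv / (2 * (nv + 1)))) by (field; lra).
    rewrite <- (Rmult_1_r d) at 2. apply Rmult_lt_compat_l; auto. apply (Rmult_lt_reg_r (2 * (nv + 1))). lra.
    unfold Rdiv; rewrite Rmult_assoc, Rinv_l; lra. }
  specialize (Hd' w Hw (hyp_comb x y t Hhx Hhy) ltac:(lra)).
  assert (Hdot : dotP N gx (vsub w x) = t * dotP N gx v).
  { unfold dotP. rewrite <- sumR_scal. apply sumR_ext; intros. unfold w; rewrite vsub_comb; unfold v; ring. }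
  rewrite Hdot, Hnw in Hd'. apply Rabs_le_inv in Hd'.
  assert (Hc : h w <= t * h y + (1 - t) * h x) by (apply conv_ns; auto).
  assert (t * (dotP N gx v - eps * nv) <= t * (h y - h x)) by nra.
  apply Rmult_le_reg_l in H0; lra. Qed.
End Conv.

Section Argmin.
Variable N : Net.
Notation nP := (Defs.nP N).
Notation rP := (rng (Defs.nP N)).
Variables (Ph : (nat -> R) -> Prop) (h : (nat -> R) -> R) (c : nat -> R).
Hypothesis Had : admissible N Ph h.

Definition phi (w : nat -> R) := sumR rP (fun p => w p * c p) + h w.

Lemma Ph_simplex x : Ph x -> in_simplex N x.
Proof. intros. apply Had; auto. Qed.
Lemma Ph_hyp x : Ph x -> in_hyp N x.
Proof. intros; apply simplex_hyp, Ph_simplex; auto. Qed.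
Lemma Ph_coord x : Ph x -> forall k, 0 <= x k <= 1.
Proof. intros; apply (simplex_coord N), Ph_simplex; auto. Qed.

Lemma dotP_plus a b v : dotP N (fun k => a k + b k) v = dotP N a v + dotP N b v.
Proof. unfold dotP. rewrite <- sumR_plus. apply sumR_ext; intros; ring. Qed.

Lemma phi_grad x gx y : Ph x -> has_tgrad N Ph h x gx -> Ph y ->
  phi x + dotP N (fun k => gx k + c k) (vsub y x) <= phi y.
Proof. intros. pose proof (grad_ineq N Ph h Had x gx y H H0 H1). unfold phi.
  rewrite dotP_plus. assert (dotP N c (vsub y x) = sumR rP (fun p => y p * c p) - sumR rP (fun p => x p * c p)).
  { unfold dotP. rewrite <- sumR_minus. apply sumR_ext; intros; unfold vsub; ring. } lra. Qed.

Lemma dot_bound a v : (forall k, Rabs (v k) <= 1) -> Rabs (dotP N a v) <= sumR rP (fun k => Rabs (a k)).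
Proof. intros. eapply Rle_trans. apply sumR_abs. apply sumR_le. intros. rewrite Rabs_mult.
  rewrite <- (Rmult_1_r (Rabs (a k))) at 2. apply Rmult_le_compat_l; auto. apply Rabs_pos. Qed.

Lemma dot_bound2 a v : Rabs (dotP N a v) <= sumR rP (fun k => Rabs (a k)) * sumR rP (fun k => Rabs (v k)).
Proof. eapply Rle_trans. apply sumR_abs. rewrite <- sumR_scal. apply sumR_le. intros.
  rewrite Rabs_mult. apply Rmult_le_compat_r. apply Rabs_pos.
  apply (term_le_sum rP (fun k => Rabs (a k))); auto. intros; apply Rabs_pos. Qed.

Lemma zmu_relint x0 w mu : rel_int N Ph x0 -> Ph w -> 0 < mu <= 1 ->
  rel_int N Ph (fun k => mu * x0 k + (1 - mu) * w k).
Proof. intros [Hx0 [d0 [Hd0 Hb]]] Hw Hmu. pose proof Had as [_ [_ [Hcv _]]].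
  split. apply Hcv; auto; lra.
  exists (mu * d0). split. nra. intros y Hy Hn.
  set (w' := fun k => (y k - (1 - mu) * w k) / mu).
  assert (Hw' : Ph w').
  { apply Hb. destruct Hy as [Hy1 Hy2]. destruct (Ph_hyp w Hw) as [Hw1 Hw2]. split.
    unfold w'. unfold Rdiv. rewrite sumR_scalr, sumR_minus, sumR_scal, Hy1, Hw1. field; lra.
    intros k Hk. unfold w'. rewrite Hy2, Hw2 by auto. unfold Rdiv; ring.
    unfold nrmP. replace (nrmL rP (vsub w' x0)) with (nrmL rP (fun k => / mu * vsub y (fun k => mu * x0 k + (1 - mu) * w k) k)).
    rewrite nrmL_scal. rewrite Rabs_right by (left; apply Rinv_0_lt_compat; lra).
    unfold nrmP in Hn. apply (Rmult_lt_reg_l mu); [lra|]. rewrite <- Rmult_assoc, Rinv_r, Rmult_1_l; lra.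
    apply nrmL_ext; intros; unfold vsub, w'. field; lra. }
  replace y with (fun k => mu * w' k + (1 - mu) * w k). apply Hcv; auto; lra.
  apply functional_extensionality; intros k. unfold w'. field; lra. Qed.

Definition ev (i k : nat) : R := if Nat.eqb k i then 1 else 0.

Lemma test_pt x0 d0 s i j : (forall y, in_hyp N y -> nrmP N (vsub y x0) < d0 -> Ph y) -> in_hyp N x0 ->
  0 < s -> 2 * s < d0 -> (i < nP)%nat -> (j < nP)%nat -> Ph (fun k => x0 k + s * (ev i k - ev j k)).
Proof. intros Hb [H1 H2] Hs Hsd Hi Hj. apply Hb.
  - split. rewrite sumR_plus, sumR_scal, sumR_minus. unfold ev. rewrite !sum_ind; auto. rewrite H1; ring.
    intros k Hk. rewrite H2 by auto. unfold ev. destruct (Nat.eqb_spec k i); [lia|]. destruct (Nat.eqb_spec k j); [lia|]. ring.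
  - eapply Rle_lt_trans. apply nrmL_le_l1.
    apply (Rle_lt_trans _ (sumR rP (fun k => s * ev i k + s * ev j k))).
    apply sumR_le; intros. unfold vsub. replace (x0 k + s * (ev i k - ev j k) - x0 k) with (s * ev i k - s * ev j k) by ring.
    eapply Rle_trans. apply Rabs_triang. rewrite Rabs_Ropp. unfold ev.
    destruct (Nat.eqb k i); destruct (Nat.eqb k j); rewrite ?Rmult_1_r, ?Rmult_0_r, ?Rabs_R0, ?Rabs_right; lra.
    rewrite sumR_plus, !sumR_scal. unfold ev; rewrite !sum_ind; auto. lra. Qed.

Lemma dot_ev a i j : (i < nP)%nat -> (j < nP)%nat -> forall s,
  dotP N a (fun k => s * (ev i k - ev j k)) = s * (a i - a j).
Proof. intros. unfold dotP. replace (sumR rP (fun k => a k * (s * (ev i k - ev j k)))) with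
  (s * (sumR rP (fun k => a k * ev i k) - sumR rP (fun k => a k * ev j k))).
  unfold ev; rewrite !sum_pick; auto.
  rewrite <- sumR_minus, <- sumR_scal. apply sumR_ext; intros; ring. Qed.

Lemma spread g k T : tangent N g -> (k < nP)%nat -> T < Rabs (g k) ->
  exists i j, (i < nP)%nat /\ (j < nP)%nat /\ T < g i - g j.
Proof. intros [Hs _] Hk HT. destruct (Rle_dec 0 (g k)).
  - rewrite Rabs_right in HT by lra.
    destruct (classic (exists j, (j < nP)%nat /\ g j <= 0)) as [[j [Hj Hgj]]|Hn].
    exists k, j; repeat split; auto; lra.
    exfalso. assert (forall j, In j rP -> 0 <= g j).
    { intros j Hj. apply in_rng in Hj. destruct (Rle_dec 0 (g j)); auto. exfalso; apply Hn. exists j; split; auto; lra. }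
    pose proof (term_le_sum rP g k H ltac:(apply in_rng; auto)).
    assert (0 < g k). { destruct (Rle_dec (g k) 0); [|lra]. exfalso; apply Hn; exists k; split; auto. }
    lra.
  - rewrite Rabs_left in HT by lra.
    destruct (classic (exists j, (j < nP)%nat /\ 0 <= g j)) as [[j [Hj Hgj]]|Hn].
    exists j, k; repeat split; auto; lra.
    exfalso. assert (forall j, In j rP -> 0 <= - g j).
    { intros j Hj. apply in_rng in Hj. destruct (Rle_dec 0 (g j)). exfalso; apply Hn. exists j; split; auto. lra. }
    pose proof (term_le_sum rP (fun j => - g j) k H ltac:(apply in_rng; auto)).
    assert (sumR rP (fun j => - g j) = 0). { replace (fun j => - g j) with (fun j => (-1) * g j) by (apply functional_extensionality; intros; ring).
      rewrite sumR_scal, Hs; ring. }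
    simpl in H0. lra. Qed.

Theorem argmin_exists : exists w, Ph w /\ forall w', Ph w' -> phi w <= phi w'.
Proof.
  pose proof Had as [HPi [Hcl [Hcv [[x0 Hx0] [_ [g [Hg [_ Hblow]]]]]]]].
  pose proof Hx0 as [Hx0P [d0 [Hd0 Hb0]]].
  set (A0 := sumR rP (fun k => Rabs (g x0 k + c k))).
  assert (Hlow : forall y, Ph y -> phi x0 - A0 <= phi y).
  { intros y Hy. pose proof (phi_grad x0 (g x0) y Hx0P (Hg x0 Hx0) Hy).
    assert (Rabs (dotP N (fun k => g x0 k + c k) (vsub y x0)) <= A0).
    { apply dot_bound. intros k. unfold vsub. pose proof (Ph_coord y Hy k). pose proof (Ph_coord x0 Hx0P k).
      apply Rabs_le; lra. }
    pose proof (Rle_abs (- dotP N (fun k => g x0 k + c k) (vsub y x0))). rewrite Rabs_Ropp in H1. lra. }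
  set (E := fun r => exists y, Ph y /\ r = - phi y).
  destruct (completeness E) as [Mx [HM1 HM2]].
  { exists (- (phi x0 - A0)). intros r [y [Hy ->]]. pose proof (Hlow y Hy). lra. }
  { exists (- phi x0). exists x0; auto. }
  set (m := - Mx).
  assert (Hm1 : forall y, Ph y -> m <= phi y). { intros y Hy. assert (E (- phi y)) by (exists y; auto). pose proof (HM1 _ H). unfold m; lra. }
  assert (Hm2 : forall eps, 0 < eps -> exists y, Ph y /\ phi y < m + eps).
  { intros eps He. apply NNPP. intros Hn. assert (is_upper_bound E (Mx - eps)).
    { intros r [y [Hy ->]]. destruct (Rle_dec (- phi y) (Mx - eps)); auto. exfalso; apply Hn. exists y; split; auto. unfold m; lra. }
    pose proof (HM2 _ H). lra. }
  set (om := fun n : nat => epsilon (inhabits (fun _ : nat => 0)) (fun y => Ph y /\ phi y < m + / INR (S n))).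
  assert (Hom : forall n, Ph (om n) /\ phi (om n) < m + / INR (S n)).
  { intros n. apply (epsilon_spec (inhabits (fun _ : nat => 0)) (fun y => Ph y /\ phi y < m + / INR (S n))).
    apply Hm2. apply Rinv_0_lt_compat, lt_0_INR; lia. }
  destruct (BWn (fun n k => om n k) (fun n k => Ph_coord _ (proj1 (Hom n)) k) nP) as [psi [L [Hpsi HL]]].
  set (ws := fun k => if Nat.ltb k nP then L k else 0).
  set (D := fun n => sumR rP (fun k => Rabs (om (psi n) k - ws k))).
  assert (HD : Un_cv D 0).
  { unfold D. rewrite <- (sumR_zero rP (fun _ => 0)) by auto. apply sumR_cv. intros k Hk.
    apply in_rng in Hk. intros e He. destruct (HL k Hk e He) as [N0 HN]. exists N0. intros n Hn.
    specialize (HN n Hn). unfold Rdist in *. rewrite Rminus_0_r, Rabs_Rabsolu. unfold ws.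
    destruct (Nat.ltb_spec k nP); [auto|lia]. }
  assert (Hws : Ph ws).
  { apply Hcl. intros k Hk. unfold ws. destruct (Nat.ltb_spec k nP); [lia|auto].
    intros d Hd. destruct (HD d Hd) as [N0 HN]. exists (om (psi N0)). split. apply Hom.
    eapply Rle_lt_trans. apply nrmL_le_l1. specialize (HN N0 (Nat.le_refl _)). unfold Rdist in HN.
    rewrite Rminus_0_r in HN. eapply Rle_lt_trans; [|exact HN]. apply Rle_abs. }
  assert (Hlim : forall z, Ph z -> has_tgrad N Ph h z (g z) -> phi z + dotP N (fun k => g z k + c k) (vsub ws z) <= m).
  { intros z Hz Hgz. set (a := fun k => g z k + c k). set (Aa := sumR rP (fun k => Rabs (a k))).
    apply (le_lim _ _ (fun n => / INR (S n) + Aa * D n)).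
    - intros n. pose proof (phi_grad z (g z) (om (psi n)) Hz Hgz (proj1 (Hom (psi n)))).
      pose proof (proj2 (Hom (psi n))).
      assert (/ INR (S (psi n)) <= / INR (S n)).
      { apply Rinv_le_contravar. apply lt_0_INR; lia. apply le_INR. pose proof (incr_ge psi Hpsi n); lia. }
      assert (dotP N a (vsub ws z) - dotP N a (vsub (om (psi n)) z) <= Aa * D n).
      { replace (dotP N a (vsub ws z) - dotP N a (vsub (om (psi n)) z)) with (dotP N a (vsub ws (om (psi n)))).
        eapply Rle_trans. apply Rle_abs. eapply Rle_trans. apply dot_bound2. unfold D.
        right. f_equal. apply sumR_ext. intros. unfold vsub. rewrite <- Rabs_Ropp. f_equal; ring.
        unfold dotP. rewrite <- sumR_minus. apply sumR_ext; intros; unfold vsub; ring. }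
      fold a in H. lra.
    - apply cv_plus0. apply inv_cv. apply cv_scal0; auto. }
  destruct (classic (rel_int N Ph ws)) as [Hri|Hnri].
  - exists ws. split; auto. intros w' Hw'. pose proof (Hlim ws Hws (Hg ws Hri)).
    assert (dotP N (fun k => g ws k + c k) (vsub ws ws) = 0).
    { unfold dotP. apply sumR_zero. intros; unfold vsub; ring. }
    pose proof (Hm1 w' Hw'). lra.
  - exfalso.
    set (s := d0 / 4).
    set (yt := fun i j => fun k => x0 k + s * (ev i k - ev j k)).
    assert (Hyt : forall i j, (i < nP)%nat -> (j < nP)%nat -> Ph (yt i j)).
    { intros. apply (test_pt x0 d0); auto. apply Ph_hyp; auto. unfold s; lra. unfold s; lra. }
    set (Q := sumR rP (fun i => sumR rP (fun j => Rabs (phi (yt i j))))).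
    assert (HQ : forall i j, (i < nP)%nat -> (j < nP)%nat -> phi (yt i j) <= Q).
    { intros. eapply Rle_trans. apply Rle_abs.
      eapply Rle_trans. apply (term_le_sum rP (fun j => Rabs (phi (yt i j))) j).
      intros; apply Rabs_pos. apply in_rng; auto.
      apply (term_le_sum rP (fun i => sumR rP (fun j => Rabs (phi (yt i j)))) i).
      intros; apply sumR_nonneg; intros; apply Rabs_pos. apply in_rng; auto. }
    set (Cc := sumR rP (fun k => Rabs (c k))).
    set (T := (Q - m) / s + 2 * Cc + 1).
    destruct (Hblow ws Hws Hnri (INR nP * T)) as [dl [Hdl Hdl']].
    set (nx := nrmP N (vsub x0 ws)).
    assert (Hnx : 0 <= nx) by apply nrmL_nonneg.
    set (mu := Rmin 1 (dl / (2 * (nx + 1)))).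
    assert (Hmu : 0 < mu <= 1). { split. apply Rmin_pos; [lra|apply Rdiv_lt_0_compat; lra]. apply Rmin_l. }
    set (z := fun k => mu * x0 k + (1 - mu) * ws k).
    assert (Hz : rel_int N Ph z) by (apply zmu_relint; auto).
    assert (Hzn : nrmP N (vsub z ws) < dl).
    { replace (nrmP N (vsub z ws)) with (mu * nx).
      assert (mu <= dl / (2 * (nx + 1))) by apply Rmin_r.
      apply (Rle_lt_trans _ (dl / (2 * (nx + 1)) * nx)). apply Rmult_le_compat_r; auto.
      unfold Rdiv. replace (dl * / (2 * (nx + 1)) * nx) with (dl * (nx / (2 * (nx + 1)))) by (field; lra).
      rewrite <- (Rmult_1_r dl) at 2. apply Rmult_lt_compat_l; auto. apply (Rmult_lt_reg_r (2 * (nx + 1))). lra.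
      unfold Rdiv; rewrite Rmult_assoc, Rinv_l; lra.
      unfold nx, nrmP. rewrite <- (Rabs_right mu) by lra. rewrite <- nrmL_scal. apply nrmL_ext. intros; unfold vsub, z; ring. }
    specialize (Hdl' z Hz Hzn).
    pose proof (Hg z Hz) as Hgz. set (a := fun k => g z k + c k).
    assert (Hdau : 0 <= dotP N a (vsub x0 ws)).
    { pose proof (Hlim z (proj1 Hz) Hgz). pose proof (Hm1 z (proj1 Hz)).
      assert (dotP N a (vsub ws z) = - mu * dotP N a (vsub x0 ws)).
      { unfold dotP. rewrite <- sumR_scal. apply sumR_ext; intros; unfold vsub, z; ring. }
      fold a in H. rewrite H1 in H. nra. }
    assert (HT : exists k, (k < nP)%nat /\ T < Rabs (g z k)).
    { apply NNPP; intros Hn. assert (sumR rP (fun k => Rabs (g z k)) <= INR (length rP) * T).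
      { apply sumR_bound. intros k Hk. apply in_rng in Hk. destruct (Rle_dec (Rabs (g z k)) T); auto. exfalso; apply Hn; exists k; split; auto; lra. }
      unfold rng in H; rewrite length_seq in H. pose proof (nrmL_le_l1 rP (g z)). unfold nrmP in Hdl'. unfold rng in H0, Hdl'. lra. }
    destruct HT as [k [Hk HTk]].
    destruct (spread (g z) k T (proj1 Hgz) Hk HTk) as [i [j [Hi [Hj Hij]]]].
    pose proof (phi_grad z (g z) (yt i j) (proj1 Hz) Hgz (Hyt i j Hi Hj)). fold a in H.
    assert (dotP N a (vsub (yt i j) z) = s * (a i - a j) + (1 - mu) * dotP N a (vsub x0 ws)).
    { rewrite <- (dot_ev a i j Hi Hj s). unfold dotP. rewrite <- sumR_scal, <- sumR_plus. apply sumR_ext; intros.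
      unfold vsub, yt, z; ring. }
    rewrite H0 in H. pose proof (Hm1 z (proj1 Hz)). pose proof (HQ i j Hi Hj).
    assert (a i - a j >= g z i - g z j - 2 * Cc).
    { unfold a. assert (Rabs (c i) <= Cc) by (apply (term_le_sum rP (fun k => Rabs (c k))); [intros; apply Rabs_pos|apply in_rng; auto]).
      assert (Rabs (c j) <= Cc) by (apply (term_le_sum rP (fun k => Rabs (c k))); [intros; apply Rabs_pos|apply in_rng; auto]).
      apply Rabs_le_inv in H3. apply Rabs_le_inv in H4. lra. }
    assert (Hs : 0 < s) by (unfold s; lra).
    assert (s * (a i - a j) > Q - m + s).
    { assert (a i - a j > (Q - m) / s + 1) by (unfold T in Hij; lra).
      apply (Rmult_lt_compat_l s) in H4; auto. rewrite Rmult_plus_distr_l in H4.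
      replace (s * ((Q - m) / s)) with (Q - m) in H4 by (field; lra). lra. }
    assert (0 <= (1 - mu) * dotP N a (vsub x0 ws)) by (apply Rmult_le_pos; lra).
    lra.
Qed.
End Argmin.

Section FF.
Variable N : Net.
Notation nP := (Defs.nP N).
Notation rP := (rng (Defs.nP N)).
Variables (Ph : (nat -> R) -> Prop) (h : (nat -> R) -> R).
Hypothesis Had : admissible N Ph h.

Lemma Fh_spec f : Ph (Fh N Ph h f).
Proof. unfold Fh.
  set (P := fun omega => Ph omega /\ forall omega', Ph omega' -> cost N f omega + h omega <= cost N f omega' + h omega').
  assert (Hex : exists w, P w) by (apply (argmin_exists N Ph h (fun p => sumR (rng (nE N)) (fun e => Ainc N e p * Tdel N e (f e))) Had)).
  apply (proj1 (epsilon_spec (inhabits (fun _ : nat => 0)) P Hex)). Qed.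

Lemma Ainc_01 e p : 0 <= Ainc N e p <= 1.
Proof. unfold Ainc. destruct existsb; lra. Qed.

Lemma fpi_bounds x e : in_simplex N x -> 0 <= fpi N x e <= 1.
Proof. intros Hx. pose proof Hx as [H1 [_ H3]]. unfold fpi. split.
  apply sumR_nonneg. intros p Hp. apply in_rng in Hp. pose proof (Ainc_01 e p). pose proof (H1 p Hp). nra.
  rewrite <- H3. apply sumR_le. intros p Hp. apply in_rng in Hp. pose proof (Ainc_01 e p). pose proof (H1 p Hp). nra. Qed.

Lemma fpi_diff x y e : Rabs (fpi N x e - fpi N y e) <= sumR rP (fun k => Rabs (x k - y k)).
Proof. unfold fpi. rewrite <- sumR_minus. eapply Rle_trans. apply sumR_abs. apply sumR_le. intros.
  replace (Ainc N e k * x k - Ainc N e k * y k) with (Ainc N e k * (x k - y k)) by ring.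
  rewrite Rabs_mult. pose proof (Ainc_01 e k). rewrite (Rabs_right (Ainc N e k)) by lra.
  pose proof (Rabs_pos (x k - y k)). nra. Qed.

Lemma Ph_seq_lim (om : nat -> nat -> R) : (forall n, Ph (om n)) ->
  exists (psi : nat -> nat) ws, (forall n, (psi n < psi (S n))%nat) /\ Ph ws /\
    Un_cv (fun n => sumR rP (fun k => Rabs (om (psi n) k - ws k))) 0.
Proof. intros Hom. pose proof Had as [_ [Hcl _]].
  destruct (BWn (fun n k => om n k) (fun n k => Ph_coord N Ph h Had _ (Hom n) k) nP) as [psi [L [Hpsi HL]]].
  set (ws := fun k => if Nat.ltb k nP then L k else 0).
  set (D := fun n => sumR rP (fun k => Rabs (om (psi n) k - ws k))).
  assert (HD : Un_cv D 0).
  { unfold D. rewrite <- (sumR_zero rP (fun _ => 0)) by auto. apply sumR_cv. intros k Hk.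
    apply in_rng in Hk. intros e He. destruct (HL k Hk e He) as [N0 HN]. exists N0. intros n Hn.
    specialize (HN n Hn). unfold Rdist in *. rewrite Rminus_0_r, Rabs_Rabsolu. unfold ws.
    destruct (Nat.ltb_spec k nP); [auto|lia]. }
  exists psi, ws. split; auto. split; auto.
  apply Hcl. intros k Hk. unfold ws. destruct (Nat.ltb_spec k nP); [lia|auto].
  intros d Hd. destruct (HD d Hd) as [N0 HN]. exists (om (psi N0)). split. apply Hom.
  eapply Rle_lt_trans. apply nrmL_le_l1. specialize (HN N0 (Nat.le_refl _)). unfold Rdist in HN.
  rewrite Rminus_0_r in HN. eapply Rle_lt_trans; [|exact HN]. apply Rle_abs. Qed.

Lemma sup_fpi e : (e < nE N)%nat -> exists B, (forall w, Ph w -> fpi N w e <= B) /\ below_cap (cap N e) B.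
Proof. intros He. pose proof Had as [HPi _].
  destruct (cap N e) as [cv|] eqn:Hc.
  - apply NNPP. intros Hn.
    assert (Hex : forall n : nat, exists w, Ph w /\ cv - / INR (S n) < fpi N w e).
    { intros n. apply NNPP; intros Hn2. apply Hn. exists (cv - / INR (S n)). split.
      intros w Hw. destruct (Rle_dec (fpi N w e) (cv - / INR (S n))); auto. exfalso; apply Hn2; exists w; split; auto; lra.
      unfold below_cap. pose proof (Rinv_0_lt_compat (INR (S n)) ltac:(apply lt_0_INR; lia)). lra. }
    set (om := fun n : nat => epsilon (inhabits (fun _ : nat => 0)) (fun w => Ph w /\ cv - / INR (S n) < fpi N w e)).
    assert (Hom : forall n, Ph (om n) /\ cv - / INR (S n) < fpi N (om n) e).
    { intros n. apply (epsilon_spec (inhabits (fun _ : nat => 0)) (fun w => Ph w /\ cv - / INR (S n) < fpi N w e)). apply Hex. }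
    destruct (Ph_seq_lim om (fun n => proj1 (Hom n))) as [psi [ws [Hpsi [Hws HD]]]].
    assert (cv <= fpi N ws e).
    { apply (le_lim _ _ (fun n => / INR (S n) + sumR rP (fun k => Rabs (om (psi n) k - ws k)))).
      intros n. pose proof (proj2 (Hom (psi n))). pose proof (fpi_diff (om (psi n)) ws e).
      apply Rabs_le_inv in H0.
      assert (/ INR (S (psi n)) <= / INR (S n)).
      { apply Rinv_le_contravar. apply lt_0_INR; lia. apply le_INR. pose proof (incr_ge psi Hpsi n); lia. }
      lra. apply cv_plus0; auto. apply inv_cv. }
    destruct (HPi ws Hws) as [_ Hb]. specialize (Hb e He). rewrite Hc in Hb. simpl in Hb. lra.
  - exists 1. split; simpl; auto. intros w Hw. apply fpi_bounds. apply HPi; auto. Qed.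
End FF.

Lemma exp_small s : 0 <= s <= 1/2 -> 0 <= exp s - 1 <= 2 * s.
Proof. intros. pose proof (exp_ineq1_le s). pose proof (exp_ineq1_le (- s)). rewrite exp_Ropp in H1.
  pose proof (exp_pos s). split. lra.
  assert (exp s * (1 - s) <= 1).
  { apply (Rmult_le_compat_l (exp s)) in H1; [|lra]. rewrite Rinv_r in H1 by lra. lra. }
  nra. Qed.

Lemma deriv_z (y : R -> R) B eta t l : derivable_pt_lim y t l ->
  derivable_pt_lim (fun s => exp (eta * s) * (y s - B)) t (eta * exp (eta * t) * (y t - B) + exp (eta * t) * l).
Proof. intros Hy.
  assert (H1 : derivable_pt_lim (fun s => exp (eta * s)) t (exp (eta * t) * eta)).
  { assert (Hl : derivable_pt_lim (fun s => eta * s) t eta).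
    { pose proof (derivable_pt_lim_scal id eta t 1 (derivable_pt_lim_id t)) as Hs. rewrite Rmult_1_r in Hs. exact Hs. }
    apply (derivable_pt_lim_comp (fun s => eta * s) exp t eta (exp (eta * t)) Hl (derivable_pt_lim_exp _)). }
  assert (H2 : derivable_pt_lim (fun s => y s - B) t (l - 0)).
  { apply (derivable_pt_lim_minus y (fct_cte B)); auto. apply derivable_pt_lim_const. }
  pose proof (derivable_pt_lim_mult _ _ t _ _ H1 H2). simpl in H.
  replace (eta * exp (eta * t) * (y t - B) + exp (eta * t) * l) with (exp (eta * t) * eta * (y t - B) + exp (eta * t) * (l - 0)) by ring.
  exact H. Qed.

Lemma ode_bound (y u : R -> R) B eta : 0 < eta ->
  (forall t, 0 < t -> derivable_pt_lim y t (eta * (u t - y t))) ->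
  (forall t, 0 < t -> u t <= B) ->
  (forall eps, 0 < eps -> exists d, 0 < d /\ forall s, 0 <= s < d -> Rabs (y s - y 0) < eps) ->
  forall t, 0 < t -> y t <= B + exp (- (eta * t)) * (y 0 - B).
Proof. intros He Hd Hu Hc t Ht.
  set (z := fun s => exp (eta * s) * (y s - B)).
  assert (Hz : forall e, 0 < e < t -> z t <= z e).
  { intros e Hee. destruct (MVT_cor2 z (fun s => eta * exp (eta * s) * (u s - B)) e t ltac:(lra)) as [c0 [Hc0 Hc1]].
    intros c1 Hc1. pose proof (deriv_z y B eta c1 _ (Hd c1 ltac:(lra))).
    replace (eta * exp (eta * c1) * (u c1 - B)) with (eta * exp (eta * c1) * (y c1 - B) + exp (eta * c1) * (eta * (u c1 - y c1))) by ring.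
    exact H.
    pose proof (Hu c0 ltac:(lra)). pose proof (exp_pos (eta * c0)).
    assert (eta * exp (eta * c0) * (u c0 - B) * (t - e) <= 0).
    { assert (0 <= eta * exp (eta * c0)) by (apply Rmult_le_pos; lra).
      assert (u c0 - B <= 0) by lra. assert (0 <= t - e) by lra.
      assert (eta * exp (eta * c0) * (u c0 - B) <= 0) by nra. nra. } lra. }
  assert (Hz0 : z t <= y 0 - B).
  { destruct (Rle_dec (z t) (y 0 - B)); auto. exfalso.
    set (dd := z t - (y 0 - B)).
    destruct (Hc (dd / 4) ltac:(unfold dd; lra)) as [d1 [Hd1 Hd1']].
    set (e := Rmin (Rmin (t / 2) (d1 / 2)) (Rmin (1 / (2 * eta)) (dd / (8 * eta * (Rabs (y 0 - B) + 1))))).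
    assert (Hpos : 0 < Rabs (y 0 - B) + 1) by (pose proof (Rabs_pos (y 0 - B)); lra).
    assert (He0 : 0 < e). { unfold e. repeat apply Rmin_pos; try lra; apply Rdiv_lt_0_compat; unfold dd in *; try lra.
      apply Rmult_lt_0_compat; lra. }
    assert (He1 : e <= t / 2) by (unfold e; eapply Rle_trans; apply Rmin_l).
    assert (He2 : e <= d1 / 2) by (unfold e; eapply Rle_trans; [apply Rmin_l|apply Rmin_r]).
    assert (He3 : e <= 1 / (2 * eta)) by (unfold e; eapply Rle_trans; [apply Rmin_r|apply Rmin_l]).
    assert (He4 : e <= dd / (8 * eta * (Rabs (y 0 - B) + 1))) by (unfold e; eapply Rle_trans; [apply Rmin_r|apply Rmin_r]).
    pose proof (Hz e ltac:(lra)).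
    specialize (Hd1' e ltac:(lra)).
    assert (Hes : 0 <= eta * e <= 1/2).
    { split. nra. apply (Rmult_le_compat_l eta) in He3; [|lra]. replace (eta * (1 / (2 * eta))) with (1/2) in He3 by (field; lra). lra. }
    pose proof (exp_small _ Hes) as [Hx1 Hx2].
    assert (Hez : eta * e * (Rabs (y 0 - B) + 1) <= dd / 8).
    { apply (Rmult_le_compat_l eta) in He4; [|lra]. apply (Rmult_le_compat_r (Rabs (y 0 - B) + 1)) in He4; [|lra].
      replace (eta * (dd / (8 * eta * (Rabs (y 0 - B) + 1))) * (Rabs (y 0 - B) + 1)) with (dd / 8) in He4 by (field; lra). lra. }
    assert (z e <= y 0 - B + 3 * dd / 4).
    { unfold z. replace (exp (eta * e) * (y e - B)) with (exp (eta * e) * (y e - y 0) + (exp (eta * e) - 1) * (y 0 - B) + (y 0 - B)) by ring.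
      assert (exp (eta * e) * (y e - y 0) <= 2 * (dd / 4)).
      { eapply Rle_trans. apply Rle_abs. rewrite Rabs_mult, Rabs_right by (left; apply exp_pos).
        apply Rmult_le_compat; try lra. apply Rabs_pos. }
      assert ((exp (eta * e) - 1) * (y 0 - B) <= dd / 4).
      { eapply Rle_trans. apply Rle_abs. rewrite Rabs_mult, (Rabs_right (exp (eta * e) - 1)) by lra.
        apply (Rle_trans _ (2 * (eta * e) * (Rabs (y 0 - B) + 1))).
        apply Rmult_le_compat; try lra. apply Rabs_pos. lra. }
      lra. }
    unfold dd in *. lra. }
  unfold z in Hz0. rewrite exp_Ropp.
  assert (Hex : 0 < exp (eta * t)) by apply exp_pos.
  assert (y t - B <= / exp (eta * t) * (y 0 - B)).
  { replace (y t - B) with (/ exp (eta * t) * (exp (eta * t) * (y t - B))) by (field; lra).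
    apply Rmult_le_compat_l; auto. left; apply Rinv_0_lt_compat; auto. }
  lra. Qed.

Lemma geom_le a n : 0 < a < 1 -> sumR (rng n) (fun v => a ^ v) <= 1 / (1 - a).
Proof. intros Ha. assert (sumR (rng n) (fun v => a ^ v) * (1 - a) = 1 - a ^ n).
  { induction n. simpl; ring. rewrite rng_S, sumR_app, Rmult_plus_distr_r, IHn. simpl. ring. }
  assert (0 < a ^ n) by (apply pow_lt; lra).
  apply le_div; lra.
Qed.

Lemma sgn_bound x : Rabs (sgn x) <= 1.
Proof. unfold sgn. destruct Rlt_dec. rewrite Rabs_R1; lra. destruct Rlt_dec.
  rewrite Rabs_left; lra. rewrite Rabs_R0; lra. Qed.

Lemma term_bound s A D dl : Rabs s <= 1 -> 0 <= A <= 1 -> 0 < dl -> dl <= D -> Rabs (s * A / D) <= / dl.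
Proof. intros. unfold Rdiv. rewrite !Rabs_mult. rewrite (Rabs_right A) by lra.
  rewrite (Rabs_right (/ D)) by (left; apply Rinv_0_lt_compat; lra).
  assert (/ D <= / dl) by (apply Rinv_le_contravar; lra).
  assert (0 < / D) by (apply Rinv_0_lt_compat; lra).
  assert (Rabs s * A <= 1). { pose proof (Rabs_pos s). nra. }
  nra. Qed.

Theorem lemma6 (N : Net) (Ph : (nat -> R) -> Prop) (h : (nat -> R) -> R) :
  net_ok N -> flows_ok N -> mincut_gt1 N -> paths_ok N -> admissible N Ph h ->
  exists l, 0 < l /\
  forall (G : nat -> (nat -> R) -> (nat -> R) -> (nat -> R)) (alpha : R),
    G_ok N G -> 0 < alpha < 1 ->
    forall eta, 0 < eta ->
    exists t0, 0 <= t0 /\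
    forall pi rho : R -> (nat -> R),
      admissible_init N pi rho -> is_solution N G Ph h eta pi rho ->
      forall t, t0 <= t ->
        dotP N (Phi N (gradW N alpha (rho t) (pi t)))
               (vsub (Fh N Ph h (fvec N (rho t))) (pi t))
        <= 2 * l / (1 - alpha).
Proof.
  intros Hnet Hflows Hcut Hpaths Had.
  set (rP := rng (nP N)). set (rE := rng (nE N)).
  set (Pl := fun e (q : R * R * R) => (forall w, Ph w -> fpi N w e <= fst (fst q)) /\ fst (fst q) < snd (fst q) /\
      0 < snd q /\ (forall y, 0 <= y -> y <= snd (fst q) -> snd q <= dmu N e (minv (mu N e) y))).
  assert (Hex : forall e, exists q, (e < nE N)%nat -> Pl e q).
  { intros e. destruct (lt_dec e (nE N)) as [He|He]; [|exists (0,0,0); intros; lia].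
    destruct (sup_fpi N Ph h Had e He) as [B0 [HB1 HB2]].
    assert (Htau : exists tau, B0 < tau /\ below_cap (cap N e) tau).
    { destruct (cap N e) as [cv|]; simpl in *. exists ((B0 + cv) / 2); split; lra. exists (B0 + 1); split; auto; lra. }
    destruct Htau as [tau [Ht1 Ht2]].
    destruct (fd_dmu_lb _ _ _ (Hflows e He) tau Ht2) as [dl [Hdl Hdl']].
    exists (B0, tau, dl). intros _. unfold Pl; simpl. repeat split; auto. }
  set (q := fun e => epsilon (inhabits (0,0,0)) (fun q => (e < nE N)%nat -> Pl e q)).
  assert (Hq : forall e, (e < nE N)%nat -> Pl e (q e)).
  { intros e He. apply (epsilon_spec (inhabits (0,0,0)) (fun q => (e < nE N)%nat -> Pl e q)); auto. }
  set (Bf := fun e => fst (fst (q e))). set (Tf := fun e => snd (fst (q e))). set (Df := fun e => snd (q e)).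
  set (L0 := sumR rE (fun e => / Df e)).
  assert (HL0 : 0 <= L0).
  { apply sumR_nonneg. intros e He. apply in_rng in He. destruct (Hq e He) as [_ [_ [H _]]].
    left; apply Rinv_0_lt_compat; auto. }
  exists (L0 + 1). split. lra.
  intros G alpha HG Hal eta Heta.
  set (t0 := sumR rE (fun e => Rmax 0 (ln ((1 + Rabs (Bf e)) / (Tf e - Bf e)) / eta)) + 1).
  assert (Ht0 : 1 <= t0).
  { assert (0 <= sumR rE (fun e => Rmax 0 (ln ((1 + Rabs (Bf e)) / (Tf e - Bf e)) / eta))).
    apply sumR_nonneg; intros; apply Rmax_l. unfold t0; lra. }
  exists t0. split. lra.
  intros pi rho Hinit Hsol t Ht.
  destruct Hsol as [Hs1 [Hs2 [Hs3 [Hs4 Hs5]]]].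
  assert (Htp : 0 < t) by lra.
  assert (Hfl : forall e, (e < nE N)%nat -> fpi N (pi t) e <= Tf e).
  { intros e He. destruct (Hq e He) as [HB [HBT [HD HD']]]. change (fst (fst (q e))) with (Bf e) in HB, HBT. change (snd (fst (q e))) with (Tf e) in HBT, HD'.
    set (y := fun s => fpi N (pi s) e).
    set (u := fun s => fpi N (Fh N Ph h (fvec N (rho s))) e).
    assert (Hdy : forall s, 0 < s -> derivable_pt_lim y s (eta * (u s - y s))).
    { intros s Hs.
      replace (eta * (u s - y s)) with (sumR (rng (nP N)) (fun p => Ainc N e p * (eta * (Fh N Ph h (fvec N (rho s)) p - pi s p)))).
      unfold y, fpi. apply (sumR_deriv (rng (nP N)) (fun s p => Ainc N e p * pi s p)). intros p Hp. apply in_rng in Hp.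
      apply (derivable_pt_lim_scal (fun s => pi s p)). apply Hs2; auto.
      unfold u, y, fpi. rewrite <- sumR_minus, <- sumR_scal. apply sumR_ext; intros; ring. }
    assert (Hub : forall s, 0 < s -> u s <= Bf e).
    { intros s Hs. apply HB. apply Fh_spec; auto. }
    assert (Hrc : forall eps, 0 < eps -> exists d, 0 < d /\ forall s, 0 <= s < d -> Rabs (y s - y 0) < eps).
    { unfold y, fpi. apply (sumR_rcont (rng (nP N)) (fun s p => Ainc N e p * pi s p)).
      intros p Hp. apply in_rng in Hp. intros eps Heps. destruct (Hs4 p Hp eps Heps) as [d [Hd Hd']].
      exists d; split; auto. intros s Hs'. specialize (Hd' s Hs').
      replace (Ainc N e p * pi s p - Ainc N e p * pi 0 p) with (Ainc N e p * (pi s p - pi 0 p)) by ring.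
      rewrite Rabs_mult. pose proof (Ainc_01 N e p). rewrite (Rabs_right (Ainc N e p)) by lra.
      pose proof (Rabs_pos (pi s p - pi 0 p)). nra. }
    pose proof (ode_bound y u (Bf e) eta Heta Hdy Hub Hrc t Htp) as Hode.
    assert (Hy0 : y 0 <= 1). { unfold y. apply fpi_bounds. apply Hinit. }
    destruct (Rle_dec (y 0 - Bf e) 0).
    - assert (exp (- (eta * t)) * (y 0 - Bf e) <= 0).
      { pose proof (exp_pos (- (eta * t))). nra. }
      unfold y in *. lra.
    - set (K := 1 + Rabs (Bf e)).
      assert (HK : y 0 - Bf e <= K) by (unfold K; pose proof (Rle_abs (- Bf e)); rewrite Rabs_Ropp in H; lra).
      assert (HKp : 0 < K) by (unfold K; pose proof (Rabs_pos (Bf e)); lra).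
      assert (Hge : ln (K / (Tf e - Bf e)) / eta <= t).
      { eapply Rle_trans. apply Rmax_r. eapply Rle_trans.
        apply (term_le_sum rE (fun e => Rmax 0 (ln ((1 + Rabs (Bf e)) / (Tf e - Bf e)) / eta)) e).
        intros; apply Rmax_l. apply in_rng; auto. unfold t0 in Ht. lra. }
      assert (Hge' : ln (K / (Tf e - Bf e)) <= eta * t).
      { apply (Rmult_le_compat_l eta) in Hge; [|lra]. replace (eta * (ln (K / (Tf e - Bf e)) / eta)) with (ln (K / (Tf e - Bf e))) in Hge by (field; lra). lra. }
      assert (Hexp : exp (- (eta * t)) <= (Tf e - Bf e) / K).
      { assert (exp (- (eta * t)) <= exp (- ln (K / (Tf e - Bf e)))).
        { destruct (Req_dec (- (eta * t)) (- ln (K / (Tf e - Bf e)))). rewrite H; lra. left; apply exp_increasing; lra. }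
        rewrite (exp_Ropp (ln _)), exp_ln in H by (apply Rdiv_lt_0_compat; lra).
        replace ((Tf e - Bf e) / K) with (/ (K / (Tf e - Bf e))) by (field; lra). auto. }
      assert (exp (- (eta * t)) * (y 0 - Bf e) <= exp (- (eta * t)) * K).
      { apply Rmult_le_compat_l; auto. left; apply exp_pos. }
      assert (exp (- (eta * t)) * K <= Tf e - Bf e).
      { apply (Rmult_le_compat_r K) in Hexp; [|lra]. replace ((Tf e - Bf e) / K * K) with (Tf e - Bf e) in Hexp by (field; lra). auto. }
      unfold y in *. lra. }
  set (F := Fh N Ph h (fvec N (rho t))). set (P := pi t).
  set (g := gradW N alpha (rho t) P). set (d := vsub F P).
  assert (HF : in_simplex N F) by (apply (Ph_simplex N Ph h Had); apply Fh_spec; auto).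
  assert (HP : in_simplex N P) by (apply Hs1; lra).
  assert (Hsd : sumR (rng (nP N)) d = 0).
  { unfold d, vsub. rewrite sumR_minus. destruct HF as [_ [_ H1]]. destruct HP as [_ [_ H2]]. rewrite H1, H2; ring. }
  assert (HPhi : dotP N (Phi N g) d = dotP N g d).
  { unfold dotP, Phi. replace (sumR (rng (nP N)) (fun k => (g k - / INR (nP N) * sumR (rng (nP N)) g) * d k))
      with (sumR (rng (nP N)) (fun k => g k * d k) - / INR (nP N) * sumR (rng (nP N)) g * sumR (rng (nP N)) d).
    rewrite Hsd; ring. rewrite <- sumR_scal, <- sumR_minus. apply sumR_ext; intros. rewrite <- sumR_scal.
    rewrite sumR_scal. ring. }
  assert (Hgb : forall p, Rabs (g p) <= L0 / (1 - alpha)).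
  { intros p. unfold g, gradW. rewrite Rabs_Ropp. eapply Rle_trans. apply sumR_abs.
    apply (Rle_trans _ (sumR (rng (nn N)) (fun v => alpha ^ v * L0))).
    - apply sumR_le. intros v Hv. rewrite Rabs_mult. rewrite (Rabs_right (alpha ^ v)) by (left; apply pow_lt; lra).
      apply Rmult_le_compat_l. left; apply pow_lt; lra.
      eapply Rle_trans. apply sumR_abs. eapply Rle_trans. 2: apply (sumR_filter_le (fun e => Nat.eqb (Defs.tl N e) v) rE).
      apply sumR_le. intros e He. unfold outE in He. apply filter_In in He as [He _]. apply in_rng in He.
      destruct (Hq e He) as [_ [_ [HD HD']]]. fold Df Tf in HD, HD'.
      apply term_bound. apply sgn_bound. apply Ainc_01. auto. unfold rhopi. apply HD'.
      apply fpi_bounds; auto. apply Hfl; auto.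
      intros e He. apply in_rng in He. destruct (Hq e He) as [_ [_ [HD _]]]. left; apply Rinv_0_lt_compat; auto.
    - rewrite sumR_scalr. unfold Rdiv. rewrite (Rmult_comm L0). apply Rmult_le_compat_r; auto.
      pose proof (geom_le alpha (nn N) Hal). unfold Rdiv in H; rewrite Rmult_1_l in H; auto. }
  assert (Hdb : sumR (rng (nP N)) (fun k => Rabs (d k)) <= 2).
  { apply (Rle_trans _ (sumR (rng (nP N)) (fun k => F k + P k))).
    apply sumR_le. intros k Hk. unfold d, vsub. pose proof (simplex_coord N F HF k). pose proof (simplex_coord N P HP k).
    eapply Rle_trans. apply Rabs_triang. rewrite Rabs_Ropp, !Rabs_right by lra. lra.
    rewrite sumR_plus. destruct HF as [_ [_ H1]]. destruct HP as [_ [_ H2]]. rewrite H1, H2; lra. }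
  fold F P g d. rewrite HPhi.
  assert (dotP N g d <= 2 * L0 / (1 - alpha)).
  { eapply Rle_trans. apply Rle_abs. eapply Rle_trans. apply sumR_abs.
    apply (Rle_trans _ (sumR (rng (nP N)) (fun k => L0 / (1 - alpha) * Rabs (d k)))).
    apply sumR_le; intros. rewrite Rabs_mult. apply Rmult_le_compat_r. apply Rabs_pos. auto.
    rewrite sumR_scal. assert (0 <= L0 / (1 - alpha)) by (unfold Rdiv; apply Rmult_le_pos; [lra|left; apply Rinv_0_lt_compat; lra]).
    replace (2 * L0 / (1 - alpha)) with (L0 / (1 - alpha) * 2) by (field; lra).
    apply Rmult_le_compat_l; auto. }
  assert (2 * L0 / (1 - alpha) <= 2 * (L0 + 1) / (1 - alpha)).
  { unfold Rdiv. apply Rmult_le_compat_r. left; apply Rinv_0_lt_compat; lra. lra. }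
  lra.
Qed.
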